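(* Let $p$ be a probability distribution on the (finite) set of trajectories. Suppose there exists a policy $\pi^\circ \in \Pi$ whose trajectory distribution satisfies $$\pi^\circ(\tau) = \frac{\sqrt{p(\tau)}}{\sum_{\tau'} \sqrt{p(\tau')}} \quad \text{for all trajectories } \tau.$$ Then there exists a (time-indexed) reward function $r = (r_t)_{t=1}^T$, $r_t : \mathcal{S}\times\mathcal{A} \to [-\infty,\infty)$, such that the meta-POMDP and the MaxEnt RL problem for $r$ have the same solutions: $$\arg\min_{\pi \in \Pi} \mathrm{Regret}_p(\pi) = \arg\max_{\pi\in\Pi} J(\pi, r).$$
   Context: Finite-horizon MDP: finite state set $\mathcal{S}$, finite action set $\mathcal{A}$, horizon $T\ge 1$, initial distribution $p_1$ on $\mathcal{S}$, transition kernel $p(s'\mid s,a)$. A trajectory is $\tau=(s_1,a_1,\dots,s_T,a_T)$. A policy is a Markov (possibly time-dependent) policy $\pi=(\pi_t(\cdot\mid s))_{t=1}^T$, each $\pi_t(\cdot\mid s)$ a probability distribution on $\mathcal{A}$; we write $\pi(a_t\mid s_t)$ for $\pi_t(a_t\mid s_t)$, and $\Pi$ denotes the set of all such policies. The trajectory distribution of $\pi$ is $\pi(\tau)=p_1(s_1)\prod_{t=1}^{T}\pi(a_t\mid s_t)\prod_{t=1}^{T-1}p(s_{t+1}\mid s_t,a_t)$, and $\mathbb{E}_\pi$ denotes expectation over $\tau\sim\pi(\tau)$. For a (possibly time-indexed) reward $r_t(s,a)$ (values in $[-\infty,\infty)$ allowed), the MaxEnt RL objective is $J(\pi,r)=\mathbb{E}_\pi\big[\sum_{t=1}^T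 r_t(s_t,a_t)\big]+\mathcal{H}_\pi[a\mid s]$, where $\mathcal{H}_\pi[a\mid s]=\mathbb{E}_\pi\big[-\sum_{t=1}^T\log\pi(a_t\mid s_t)\big]$ (with $0\log 0=0$); the MaxEnt RL problem is to maximize $J(\cdot,r)$ over $\Pi$. Meta-POMDP: given a target distribution $p$ over trajectories (a belief over an unobserved target trajectory $\tau^*$), the agent repeatedly runs episodes with the same policy until it produces $\tau^*$; its regret is the expected number of episodes, $\mathrm{Regret}_p(\pi)=\sum_{\tau:\,p(\tau)>0} \frac{p(\tau)}{\pi(\tau)}$, with the convention $p(\tau)/0=+\infty$. Solving the meta-POMDP means minimizing $\mathrm{Regret}_p$ over $\Pi$. *)

(* Defs.v *)
From Stdlib Require Import Reals List Bool.
Import ListNotations.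
Open Scope R_scope.
Set Implicit Arguments.

Definition finite_enum (X : Type) (e : list X) : Prop :=
  NoDup e /\ forall x : X, In x e.

Definition sumR {X : Type} (l : list X) (f : X -> R) : R :=
  fold_right (fun x acc => f x + acc) 0 l.

Definition Rltb (x y : R) : bool := if Rlt_dec x y then true else false.

Inductive ereal : Type := EFin (x : R) | EPInf | ENInf.

Definition ele (x y : ereal) : Prop :=
  match x, y with
  | ENInf, _ => True
  | _, EPInf => True
  | EFin a, EFin b => a <= b
  | _, _ => False
  end.

Definition traj (St Ac : Type) := list (St * Ac).

Fixpoint all_seqs {X : Type} (l : list X) (n : nat) : list (list X) :=
  match n with
  | O => [ [] ]
  | S n' => flat_map (fun x => map (cons x) (all_seqs l n')) l
  end.

Definition all_trajs {St Ac : Type} (eS : list St) (eA : list Ac) (T : nat)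
  : list (traj St Ac) := all_seqs (list_prod eS eA) T.

(* Markov time-dependent policy: pi t s a = pi_t(a | s), t = 1..T *)
Definition policy (St Ac : Type) := nat -> St -> Ac -> R.

Definition is_policy {St Ac : Type} (eS : list St) (eA : list Ac) (T : nat)
  (pi : policy St Ac) : Prop :=
  forall t, (1 <= t <= T)%nat ->
    forall s, (forall a, 0 <= pi t s a) /\ sumR eA (fun a => pi t s a) = 1.

Fixpoint traj_prob_from {St Ac : Type} (P : St -> Ac -> St -> R)
  (pi : policy St Ac) (t : nat) (s : St) (a : Ac) (rest : traj St Ac) : R :=
  pi t s a *
  match rest with
  | [] => 1
  | (s', a') :: rest' => P s a s' * traj_prob_from P pi (S t) s' a' rest'
  end.

(* pi(tau) = p1(s1) prod_t pi_t(a_t|s_t) prod_{t<T} p(s_{t+1}|s_t,a_t) *)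
Definition traj_prob {St Ac : Type} (p1 : St -> R) (P : St -> Ac -> St -> R)
  (pi : policy St Ac) (tau : traj St Ac) : R :=
  match tau with
  | [] => 1
  | (s, a) :: rest => p1 s * traj_prob_from P pi 1 s a rest
  end.

Fixpoint sum_steps {St Ac : Type} (f : nat -> St -> Ac -> R) (t : nat)
  (tau : traj St Ac) : R :=
  match tau with
  | [] => 0
  | (s, a) :: tau' => f t s a + sum_steps f (S t) tau'
  end.

(* rewards with values in [-oo, oo): None stands for -oo *)
Definition reward (St Ac : Type) := nat -> St -> Ac -> option R.

Fixpoint reward_sum {St Ac : Type} (r : reward St Ac) (t : nat)
  (tau : traj St Ac) : option R :=
  match tau with
  | [] => Some 0
  | (s, a) :: tau' =>
      match r t s a, reward_sum r (S t) tau' with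
      | Some x, Some y => Some (x + y)
      | _, _ => None
      end
  end.

(* E_pi[sum_t r_t] + H_pi[a|s], with 0 * (-oo) = 0 and 0 log 0 = 0:
   -oo iff some trajectory of positive probability has reward -oo. *)
Definition J_obj {St Ac : Type} (eS : list St) (eA : list Ac) (T : nat)
  (p1 : St -> R) (P : St -> Ac -> St -> R)
  (pi : policy St Ac) (r : reward St Ac) : ereal :=
  if existsb (fun tau =>
        Rltb 0 (traj_prob p1 P pi tau) &&
        match reward_sum r 1 tau with None => true | Some _ => false end)
      (all_trajs eS eA T)
  then ENInf
  else EFin (sumR (all_trajs eS eA T) (fun tau =>
         if Rltb 0 (traj_prob p1 P pi tau) then
           traj_prob p1 P pi tau *
           (match reward_sum r 1 tau with Some x => x | None => 0 end
            - sum_steps (fun t s a => ln (pi t s a)) 1 tau)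
         else 0)).

(* Regret_p(pi) = sum_{tau : p(tau) > 0} p(tau) / pi(tau), with p/0 = +oo *)
Definition regret {St Ac : Type} (eS : list St) (eA : list Ac) (T : nat)
  (p1 : St -> R) (P : St -> Ac -> St -> R)
  (p : traj St Ac -> R) (pi : policy St Ac) : ereal :=
  if existsb (fun tau =>
        Rltb 0 (p tau) && negb (Rltb 0 (traj_prob p1 P pi tau)))
      (all_trajs eS eA T)
  then EPInf
  else EFin (sumR (all_trajs eS eA T) (fun tau =>
         if Rltb 0 (p tau) then p tau / traj_prob p1 P pi tau else 0)).

Definition argmin_regret {St Ac : Type} (eS : list St) (eA : list Ac) (T : nat)
  (p1 : St -> R) (P : St -> Ac -> St -> R)
  (p : traj St Ac -> R) (pi : policy St Ac) : Prop :=
  is_policy eS eA T pi /\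
  forall pi', is_policy eS eA T pi' ->
    ele (regret eS eA T p1 P p pi) (regret eS eA T p1 P p pi').

Definition argmax_J {St Ac : Type} (eS : list St) (eA : list Ac) (T : nat)
  (p1 : St -> R) (P : St -> Ac -> St -> R)
  (r : reward St Ac) (pi : policy St Ac) : Prop :=
  is_policy eS eA T pi /\
  forall pi', is_policy eS eA T pi' ->
    ele (J_obj eS eA T p1 P pi' r) (J_obj eS eA T p1 P pi r).

(* Main.v *)
Require Import Defs.
From Stdlib Require Import Reals List Lra Lia Psatz.
Import ListNotations.
Open Scope R_scope.

Lemma Rltb_true x y : Rltb x y = true <-> x < y.
Proof. unfold Rltb; destruct (Rlt_dec x y); split; intro H; try reflexivity; try assumption; try discriminate; try lra. Qed.
Lemma Rltb_false x y : Rltb x y = false <-> ~ x < y.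
Proof. unfold Rltb; destruct (Rlt_dec x y); split; intro H; try reflexivity; try assumption; try discriminate; try lra; tauto. Qed.

Lemma sumR_nil {X} (f : X -> R) : sumR [] f = 0. Proof. reflexivity. Qed.
Lemma sumR_cons {X} (a : X) l f : sumR (a :: l) f = f a + sumR l f. Proof. reflexivity. Qed.

Lemma sumR_ext_in {X} (l : list X) f g : (forall x, In x l -> f x = g x) -> sumR l f = sumR l g.
Proof. induction l as [|a l IH]; intros H; [reflexivity|]. rewrite !sumR_cons.
 f_equal; [apply H; simpl; auto | apply IH; intros; apply H; simpl; auto]. Qed.

Lemma sumR_le_in {X} (l : list X) f g : (forall x, In x l -> f x <= g x) -> sumR l f <= sumR l g.
Proof. induction l as [|a l IH]; intros H; [rewrite !sumR_nil; lra|]. rewrite !sumR_cons.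
 apply Rplus_le_compat; [apply H; simpl; auto | apply IH; intros; apply H; simpl; auto]. Qed.

Lemma sumR_eq_le {X} (l : list X) f g : (forall x, In x l -> f x <= g x) -> sumR l f = sumR l g ->
  forall x, In x l -> f x = g x.
Proof. induction l as [|a l IH]; intros H He x Hx; [destruct Hx|]. rewrite !sumR_cons in He.
 assert (H1 : f a <= g a) by (apply H; simpl; auto).
 assert (H2 : sumR l f <= sumR l g) by (apply sumR_le_in; intros; apply H; simpl; auto).
 destruct Hx as [<-|Hx]; [lra|]. apply IH; auto. intros; apply H; simpl; auto. lra. Qed.

Lemma sumR_plus {X} (l : list X) f g : sumR l (fun x => f x + g x) = sumR l f + sumR l g.
Proof. induction l as [|a l IH]; [rewrite !sumR_nil; lra|]. rewrite !sumR_cons, IH; ring. Qed.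
Lemma sumR_minus {X} (l : list X) f g : sumR l (fun x => f x - g x) = sumR l f - sumR l g.
Proof. induction l as [|a l IH]; [rewrite !sumR_nil; lra|]. rewrite !sumR_cons, IH; ring. Qed.
Lemma sumR_scal {X} (l : list X) c f : sumR l (fun x => c * f x) = c * sumR l f.
Proof. induction l as [|a l IH]; [rewrite !sumR_nil; lra|]. rewrite !sumR_cons, IH; ring. Qed.
Lemma sumR_zero {X} (l : list X) : sumR l (fun _ => 0) = 0.
Proof. induction l as [|a l IH]; [reflexivity|]. rewrite !sumR_cons, IH; ring. Qed.
Lemma sumR_app {X} (l1 l2 : list X) f : sumR (l1 ++ l2) f = sumR l1 f + sumR l2 f.
Proof. induction l1 as [|a l IH]; simpl app; [rewrite sumR_nil; lra|]. rewrite !sumR_cons, IH; ring. Qed.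
Lemma sumR_map {X Y} (h : X -> Y) l f : sumR (map h l) f = sumR l (fun x => f (h x)).
Proof. induction l as [|a l IH]; [reflexivity|]. simpl map. rewrite !sumR_cons, IH; ring. Qed.
Lemma sumR_flat_map {X Y} (h : X -> list Y) l f : sumR (flat_map h l) f = sumR l (fun x => sumR (h x) f).
Proof. induction l as [|a l IH]; [reflexivity|]. simpl flat_map. rewrite sumR_app, !sumR_cons, IH; ring. Qed.
Lemma sumR_list_prod {X Y} (l1 : list X) (l2 : list Y) f :
  sumR (list_prod l1 l2) f = sumR l1 (fun x => sumR l2 (fun y => f (x, y))).
Proof. induction l1 as [|a l IH]; [reflexivity|]. simpl list_prod. rewrite sumR_app, sumR_map, !sumR_cons, IH; ring. Qed.
Lemma sumR_nonneg {X} (l : list X) f : (forall x, In x l -> 0 <= f x) -> 0 <= sumR l f.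
Proof. intros H. rewrite <- (sumR_zero l). apply sumR_le_in; auto. Qed.

Lemma all_seqs_length {X} (l : list X) n tau : In tau (all_seqs l n) -> length tau = n.
Proof. revert tau; induction n; simpl; intros tau H.
 - destruct H as [H|[]]; subst; reflexivity.
 - apply in_flat_map in H. destruct H as [x [_ H]]. apply in_map_iff in H.
   destruct H as [r [<- H]]. simpl. f_equal. auto.
Qed.

Lemma existsb_false_in {X} (f : X -> bool) l : existsb f l = false -> forall x, In x l -> f x = false.
Proof. induction l as [|a l IH]; simpl; intros H x Hx; [destruct Hx|].
 apply Bool.orb_false_iff in H. destruct H. destruct Hx as [<-|Hx]; auto. Qed.
Lemma existsb_false_of {X} (f : X -> bool) l : (forall x, In x l -> f x = false) -> existsb f l = false.
Proof. induction l as [|a l IH]; simpl; intros H; auto. rewrite H, IH; auto. Qed.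

Lemma pos_mult x y : 0 <= x -> 0 <= y -> 0 < x * y -> 0 < x /\ 0 < y.
Proof. intros; split; nra. Qed.

Lemma ln_ineq N Q : 0 < N -> 0 < Q -> N * (ln Q - ln N) <= Q - N /\ (N * (ln Q - ln N) = Q - N -> Q = N).
Proof. intros HN HQ. set (d := ln Q - ln N).
 assert (HQe : Q = N * exp d).
 { unfold d. unfold Rminus. rewrite exp_plus, exp_Ropp, !exp_ln; auto. field. lra. }
 split.
 - pose proof (exp_ineq1_le d). rewrite HQe. nra.
 - intro He. destruct (Req_dec d 0) as [Hd|Hd].
   + rewrite HQe, Hd, exp_0. ring.
   + pose proof (exp_ineq1 d Hd). rewrite HQe in He. nra.
Qed.

Lemma tpf_nonneg {St Ac} (P : St->Ac->St->R) (pi : policy St Ac) rest : forall t s a,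
  (forall s a s', 0 <= P s a s') ->
  (forall k s a, (t <= k <= t + length rest)%nat -> 0 <= pi k s a) ->
  0 <= traj_prob_from P pi t s a rest.
Proof. induction rest as [|[s' a'] rest IH]; intros t s a HP Hpi; simpl.
 - rewrite Rmult_1_r. apply Hpi; lia.
 - apply Rmult_le_pos. apply Hpi; simpl; lia. apply Rmult_le_pos; auto. apply IH; auto.
   intros k s0 a0 Hk. apply Hpi. simpl. lia.
Qed.

Lemma tpf_sum {St Ac} (eS : list St) (eA : list Ac) P (pi : policy St Ac) n : forall t s a,
  (forall s a, sumR eS (P s a) = 1) ->
  (forall k s, (t < k <= t + n)%nat -> sumR eA (fun a => pi k s a) = 1) ->
  sumR (all_seqs (list_prod eS eA) n) (traj_prob_from P pi t s a) = pi t s a.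
Proof. induction n; intros t s a HP Hpi.
 - simpl. unfold sumR; simpl. ring.
 - simpl all_seqs. rewrite sumR_flat_map.
   transitivity (sumR (list_prod eS eA) (fun x => pi t s a * (P s a (fst x) * pi (S t) (fst x) (snd x)))).
   + apply sumR_ext_in. intros [s' a'] _. rewrite sumR_map. cbn [traj_prob_from fst snd].
     rewrite sumR_scal, sumR_scal, IHn; auto. intros k s0 Hk. apply Hpi; lia.
   + rewrite sumR_scal, sumR_list_prod. cbn [fst snd].
     transitivity (pi t s a * sumR eS (P s a)); [|rewrite HP; ring].
     f_equal. apply sumR_ext_in. intros s' _. rewrite sumR_scal, Hpi by lia. ring.
Qed.

Lemma traj_sum {St Ac} (eS : list St) (eA : list Ac) T p1 P (pi : policy St Ac) :
  (1 <= T)%nat -> sumR eS p1 = 1 -> (forall s a, sumR eS (P s a) = 1) ->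
  is_policy eS eA T pi -> sumR (all_trajs eS eA T) (traj_prob p1 P pi) = 1.
Proof. intros HT Hp1 HP Hpi. destruct T as [|n]; [lia|]. unfold all_trajs. simpl all_seqs.
 rewrite sumR_flat_map.
 transitivity (sumR (list_prod eS eA) (fun x => p1 (fst x) * pi 1%nat (fst x) (snd x))).
 - apply sumR_ext_in. intros [s a] _. rewrite sumR_map. cbn [traj_prob fst snd].
   rewrite sumR_scal, tpf_sum; auto. intros k s0 Hk. apply Hpi; lia.
 - rewrite sumR_list_prod. cbn [fst snd]. rewrite <- Hp1. apply sumR_ext_in.
   intros s _. rewrite sumR_scal. pose proof (proj2 (Hpi 1%nat ltac:(lia) s)) as H1. change (sumR eA (fun a => pi 1%nat s a)) with (sumR eA (pi 1%nat s)) in H1. rewrite H1. ring.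
Qed.

Lemma traj_nonneg {St Ac} (eS : list St) (eA : list Ac) T p1 P (pi : policy St Ac) tau :
  (1 <= T)%nat -> (forall s, 0 <= p1 s) -> (forall s a s', 0 <= P s a s') ->
  is_policy eS eA T pi -> In tau (all_trajs eS eA T) -> 0 <= traj_prob p1 P pi tau.
Proof. intros HT Hp1 HP Hpi Hin. pose proof (all_seqs_length _ _ _ Hin) as Hl.
 destruct tau as [|[s a] rest]; simpl in Hl; [lia|]. cbn [traj_prob].
 apply Rmult_le_pos; auto. apply tpf_nonneg; auto. intros k s0 a0 Hk. apply Hpi; lia.
Qed.

Definition rew {St Ac} (pic : policy St Ac) : reward St Ac :=
  fun t s a => if Rltb 0 (pic t s a) then Some (ln (pic t s a)) else None.

Lemma tpf_log {St Ac} (P : St->Ac->St->R) (pi pic : policy St Ac) rest : forall t s a,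
  (forall s a s', 0 <= P s a s') ->
  (forall k s a, (t <= k <= t + length rest)%nat -> 0 <= pi k s a /\ 0 <= pic k s a) ->
  0 < traj_prob_from P pi t s a rest ->
  (0 < traj_prob_from P pic t s a rest ->
     exists x, reward_sum (rew pic) t ((s,a)::rest) = Some x /\
       x - sum_steps (fun t s a => ln (pi t s a)) t ((s,a)::rest) =
       ln (traj_prob_from P pic t s a rest) - ln (traj_prob_from P pi t s a rest)) /\
  (traj_prob_from P pic t s a rest = 0 -> reward_sum (rew pic) t ((s,a)::rest) = None).
Proof. induction rest as [|[s' a'] rest IH]; intros t s a HP Hpos HN.
 - cbn [traj_prob_from reward_sum sum_steps] in *. rewrite Rmult_1_r in *. unfold rew. split.
   + intro Hq. exists (ln (pic t s a) + 0).
     replace (Rltb 0 (pic t s a)) with true by (symmetry; apply Rltb_true; auto).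
     split; [reflexivity| rewrite Rmult_1_r; ring].
   + intro Hq. rewrite Hq. replace (Rltb 0 0) with false by (symmetry; apply Rltb_false; lra).
     reflexivity.
 - cbn [traj_prob_from] in HN |- *.
   assert (Hr : forall k s a, (S t <= k <= S t + length rest)%nat -> 0 <= pi k s a /\ 0 <= pic k s a)
     by (intros; apply Hpos; simpl; lia).
   assert (Hp0 := proj1 (Hpos t s a ltac:(lia))).
   assert (Hq0 := proj2 (Hpos t s a ltac:(lia))).
   assert (HB := tpf_nonneg P pi rest (S t) s' a' HP (fun k s a H => proj1 (Hr k s a H))).
   assert (HBq := tpf_nonneg P pic rest (S t) s' a' HP (fun k s a H => proj2 (Hr k s a H))).
   pose proof (HP s a s') as HPs.
   destruct (pos_mult _ _ Hp0 (Rmult_le_pos _ _ HPs HB) HN) as [Hpi HPB].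
   destruct (pos_mult _ _ HPs HB HPB) as [HPp HBp].
   destruct (IH (S t) s' a' HP Hr HBp) as [IH1 IH2].
   set (B := traj_prob_from P pi (S t) s' a' rest) in *.
   set (Bq := traj_prob_from P pic (S t) s' a' rest) in *.
   cbn [reward_sum sum_steps] in *. split.
   + intro Hq. destruct (pos_mult _ _ Hq0 (Rmult_le_pos _ _ HPs HBq) Hq) as [Hqp HPBq].
     destruct (pos_mult _ _ HPs HBq HPBq) as [_ HBqp].
     destruct (IH1 HBqp) as [x' [Hx'1 Hx'2]].
     exists (ln (pic t s a) + x'). unfold rew at 1.
     replace (Rltb 0 (pic t s a)) with true by (symmetry; apply Rltb_true; auto).
     rewrite Hx'1. split; [reflexivity|].
     rewrite !ln_mult by (try apply Rmult_lt_0_compat; auto). lra.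
   + intro Hq. unfold rew at 1. destruct (Rltb 0 (pic t s a)) eqn:E; [|reflexivity].
     apply Rltb_true in E. assert (Bq = 0).
     { destruct (Rmult_integral _ _ Hq) as [H|H]; [lra|].
       destruct (Rmult_integral _ _ H) as [H'|H']; lra. }
     rewrite (IH2 H). reflexivity.
Qed.

Lemma tp_log {St Ac} (eS : list St) (eA : list Ac) T p1 P (pi pic : policy St Ac) tau :
  (1 <= T)%nat -> (forall s, 0 <= p1 s) -> (forall s a s', 0 <= P s a s') ->
  is_policy eS eA T pi -> is_policy eS eA T pic -> In tau (all_trajs eS eA T) ->
  0 < traj_prob p1 P pi tau ->
  (0 < traj_prob p1 P pic tau ->
     exists x, reward_sum (rew pic) 1 tau = Some x /\
       x - sum_steps (fun t s a => ln (pi t s a)) 1 tau =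
       ln (traj_prob p1 P pic tau) - ln (traj_prob p1 P pi tau)) /\
  (traj_prob p1 P pic tau = 0 -> reward_sum (rew pic) 1 tau = None).
Proof. intros HT Hp1 HP Hpi Hpic Hin HN. pose proof (all_seqs_length _ _ _ Hin) as Hl.
 destruct tau as [|[s a] rest]; simpl in Hl; [lia|]. cbn [traj_prob] in *.
 assert (Hr : forall k s a, (1 <= k <= 1 + length rest)%nat -> 0 <= pi k s a /\ 0 <= pic k s a)
   by (intros; split; [apply Hpi|apply Hpic]; lia).
 assert (HB := tpf_nonneg P pi rest 1 s a HP (fun k s a H => proj1 (Hr k s a H))).
 assert (HBq := tpf_nonneg P pic rest 1 s a HP (fun k s a H => proj2 (Hr k s a H))).
 destruct (pos_mult _ _ (Hp1 s) HB HN) as [Hps HBp].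
 destruct (tpf_log P pi pic rest 1 s a HP Hr HBp) as [H1 H2]. split.
 - intro Hq. destruct (pos_mult _ _ (Hp1 s) HBq Hq) as [_ HBqp].
   destruct (H1 HBqp) as [x [Hx1 Hx2]]. exists x. split; auto.
   rewrite !ln_mult by auto. lra.
 - intro Hq. apply H2. destruct (Rmult_integral _ _ Hq); lra.
Qed.

Lemma J_E {St Ac} (eS : list St) (eA : list Ac) T p1 P (pi pic : policy St Ac) :
  (1 <= T)%nat -> (forall s, 0 <= p1 s) -> (forall s a s', 0 <= P s a s') ->
  is_policy eS eA T pi -> is_policy eS eA T pic ->
  (forall tau, In tau (all_trajs eS eA T) -> traj_prob p1 P pi tau = traj_prob p1 P pic tau) ->
  J_obj eS eA T p1 P pi (rew pic) = EFin 0.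
Proof. intros HT Hp1 HP Hpi Hpic HE. unfold J_obj.
 rewrite existsb_false_of.
 - f_equal. transitivity (sumR (all_trajs eS eA T) (fun _ => 0)); [|apply sumR_zero]. apply sumR_ext_in.
   intros tau Hin. destruct (Rltb 0 (traj_prob p1 P pi tau)) eqn:E; [|reflexivity].
   apply Rltb_true in E.
   destruct (tp_log eS eA T p1 P pi pic tau HT Hp1 HP Hpi Hpic Hin E) as [H1 _].
   rewrite <- HE in H1 by auto. destruct (H1 E) as [x [Hx1 Hx2]]. rewrite Hx1, Hx2, HE by auto. ring.
 - intros tau Hin. destruct (Rltb 0 (traj_prob p1 P pi tau)) eqn:E; [|reflexivity].
   apply Rltb_true in E.
   destruct (tp_log eS eA T p1 P pi pic tau HT Hp1 HP Hpi Hpic Hin E) as [H1 _].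
   rewrite <- HE in H1 by auto. destruct (H1 E) as [x [Hx1 Hx2]]. rewrite Hx1. reflexivity.
Qed.

Lemma h_bound {St Ac} (eS : list St) (eA : list Ac) T p1 P (pi pic : policy St Ac) tau :
  (1 <= T)%nat -> (forall s, 0 <= p1 s) -> (forall s a s', 0 <= P s a s') ->
  is_policy eS eA T pi -> is_policy eS eA T pic -> In tau (all_trajs eS eA T) ->
  (Rltb 0 (traj_prob p1 P pi tau) &&
        match reward_sum (rew pic) 1 tau with None => true | Some _ => false end)%bool = false ->
  let h := (if Rltb 0 (traj_prob p1 P pi tau) then
           traj_prob p1 P pi tau *
           (match reward_sum (rew pic) 1 tau with Some x => x | None => 0 end
            - sum_steps (fun t s a => ln (pi t s a)) 1 tau)
         else 0) in
  h <= traj_prob p1 P pic tau - traj_prob p1 P pi tau /\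
  (h = traj_prob p1 P pic tau - traj_prob p1 P pi tau -> traj_prob p1 P pi tau = traj_prob p1 P pic tau).
Proof. intros HT Hp1 HP Hpi Hpic Hin Hex h. unfold h.
 pose proof (traj_nonneg eS eA T p1 P pi tau HT Hp1 HP Hpi Hin) as HN.
 pose proof (traj_nonneg eS eA T p1 P pic tau HT Hp1 HP Hpic Hin) as HQ.
 destruct (Rltb 0 (traj_prob p1 P pi tau)) eqn:E.
 - apply Rltb_true in E. simpl in Hex.
   destruct (tp_log eS eA T p1 P pi pic tau HT Hp1 HP Hpi Hpic Hin E) as [H1 H2].
   destruct (Req_dec (traj_prob p1 P pic tau) 0) as [Hz|Hz].
   + rewrite (H2 Hz) in Hex. discriminate.
   + assert (HQp : 0 < traj_prob p1 P pic tau) by (destruct HQ as [HQ|HQ]; [exact HQ|exfalso; apply Hz; symmetry; exact HQ]). destruct (H1 HQp) as [x [Hx1 Hx2]]. rewrite Hx1, Hx2.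
     destruct (ln_ineq _ _ E HQp) as [A B]. split; [exact A|]. intro HH; symmetry; apply B; exact HH.
 - apply Rltb_false in E. split; [lra|]. intro; lra.
Qed.

Lemma J_le {St Ac} (eS : list St) (eA : list Ac) T p1 P (pi pic : policy St Ac) :
  (1 <= T)%nat -> (forall s, 0 <= p1 s) -> sumR eS p1 = 1 ->
  (forall s a, (forall s', 0 <= P s a s') /\ sumR eS (P s a) = 1) ->
  is_policy eS eA T pi -> is_policy eS eA T pic ->
  ele (J_obj eS eA T p1 P pi (rew pic)) (EFin 0) /\
  (ele (EFin 0) (J_obj eS eA T p1 P pi (rew pic)) ->
   forall tau, In tau (all_trajs eS eA T) -> traj_prob p1 P pi tau = traj_prob p1 P pic tau).
Proof. intros HT Hp1 Hs1 HPP Hpi Hpic.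
 assert (HP : forall s a s', 0 <= P s a s') by (intros; apply HPP).
 assert (HPs : forall s a, sumR eS (P s a) = 1) by (intros; apply HPP).
 pose proof (traj_sum eS eA T p1 P pi HT Hs1 HPs Hpi) as S1.
 pose proof (traj_sum eS eA T p1 P pic HT Hs1 HPs Hpic) as S2.
 unfold J_obj. destruct existsb eqn:Ex.
 - split; [exact I|]. intros [].
 - pose proof (existsb_false_in _ _ Ex) as Hx.
   assert (Hle : forall tau, In tau (all_trajs eS eA T) -> _ ) by
     (intros tau Hin; exact (h_bound eS eA T p1 P pi pic tau HT Hp1 HP Hpi Hpic Hin (Hx tau Hin))).
   assert (Hsum := sumR_le_in (all_trajs eS eA T) _ _ (fun tau Hin => proj1 (Hle tau Hin))).
   rewrite sumR_minus, S1, S2 in Hsum. cbn [ele]. split; [lra|].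
   intros H0 tau Hin. apply (proj2 (Hle tau Hin)).
   refine (sumR_eq_le _ _ _ (fun tau Hin => proj1 (Hle tau Hin)) _ tau Hin).
   rewrite sumR_minus, S1, S2. lra.
Qed.

Lemma term_ineq pt N Z : 0 <= pt -> 0 <= N -> 0 < Z -> (0 < pt -> 0 < N) ->
  let f := if Rltb 0 pt then pt / N else 0 in
  2 * Z * sqrt pt - Z * Z * N <= f /\ (2 * Z * sqrt pt - Z * Z * N = f -> N = sqrt pt / Z).
Proof. intros Hp HN HZ Hpos f. unfold f.
 destruct (Rltb 0 pt) eqn:E.
 - apply Rltb_true in E. specialize (Hpos E). set (u := sqrt pt).
   assert (Hu : u * u = pt) by (apply sqrt_sqrt; lra).
   set (w := pt / N). assert (Hw : w * N = pt) by (unfold w; field; lra).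
   split.
   + apply (Rmult_le_reg_r N); [lra|]. rewrite Hw, <- Hu. pose proof (Rle_0_sqr (u - Z * N)). unfold Rsqr in *. nra.
   + intro He. assert (He' : (2 * Z * u - Z * Z * N) * N = w * N) by (rewrite He; ring).
     assert (Hsq : (u - Z * N) * (u - Z * N) = 0) by nra.
     destruct (Rmult_integral _ _ Hsq) as [Hs|Hs]; assert (u = Z * N) by lra; rewrite H; field; lra.
 - apply Rltb_false in E. assert (pt = 0) by lra. subst pt. rewrite sqrt_0. split.
   + nra.
   + intro He. rewrite Rdiv_0_l. assert (HZZ : Z * (Z * N) = 0) by lra. destruct (Rmult_integral _ _ HZZ) as [h|h]; [lra|]. destruct (Rmult_integral _ _ h); lra.
Qed.

Lemma reg_lb {St Ac} (eS : list St) (eA : list Ac) T p1 P (p : traj St Ac -> R) (pi : policy St Ac) Z :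
  (forall tau, In tau (all_trajs eS eA T) -> 0 <= traj_prob p1 P pi tau) ->
  sumR (all_trajs eS eA T) (traj_prob p1 P pi) = 1 ->
  (forall tau, In tau (all_trajs eS eA T) -> 0 <= p tau) ->
  sumR (all_trajs eS eA T) (fun tau => sqrt (p tau)) = Z -> 0 < Z ->
  regret eS eA T p1 P p pi = EPInf \/
  exists v, regret eS eA T p1 P p pi = EFin v /\ Z * Z <= v /\
    (v <= Z * Z -> forall tau, In tau (all_trajs eS eA T) -> traj_prob p1 P pi tau = sqrt (p tau) / Z).
Proof. intros HN S1 Hp HZ Zpos. unfold regret. destruct existsb eqn:Ex; [left; reflexivity|right].
 eexists; split; [reflexivity|].
 pose proof (existsb_false_in _ _ Ex) as Hx.
 assert (Hle : forall tau, In tau (all_trajs eS eA T) ->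
   2 * Z * sqrt (p tau) - Z * Z * traj_prob p1 P pi tau <= (if Rltb 0 (p tau) then p tau / traj_prob p1 P pi tau else 0) /\
   (2 * Z * sqrt (p tau) - Z * Z * traj_prob p1 P pi tau = (if Rltb 0 (p tau) then p tau / traj_prob p1 P pi tau else 0) -> traj_prob p1 P pi tau = sqrt (p tau) / Z)).
 { intros tau Hin. refine (term_ineq (p tau) (traj_prob p1 P pi tau) Z (Hp tau Hin) (HN tau Hin) Zpos _).
   intro Hpt. specialize (Hx tau Hin). cbv beta in Hx. apply Rltb_true in Hpt. rewrite Hpt in Hx. simpl in Hx.
   destruct (Rltb 0 (traj_prob p1 P pi tau)) eqn:E; [apply Rltb_true; exact E| discriminate]. }
 assert (Hg : sumR (all_trajs eS eA T) (fun tau => 2 * Z * sqrt (p tau) - Z * Z * traj_prob p1 P pi tau) = Z * Z).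
 { rewrite sumR_minus, !sumR_scal, HZ, S1. ring. }
 assert (Hsum := sumR_le_in (all_trajs eS eA T) _ _ (fun tau Hin => proj1 (Hle tau Hin))).
 rewrite Hg in Hsum. split; [exact Hsum|].
 intros H0 tau Hin. apply (proj2 (Hle tau Hin)).
 refine (sumR_eq_le _ _ _ (fun tau Hin => proj1 (Hle tau Hin)) _ tau Hin).
 rewrite Hg. lra.
Qed.

Lemma reg_E {St Ac} (eS : list St) (eA : list Ac) T p1 P (p : traj St Ac -> R) (pi : policy St Ac) Z :
  (forall tau, In tau (all_trajs eS eA T) -> 0 <= p tau) ->
  sumR (all_trajs eS eA T) (fun tau => sqrt (p tau)) = Z -> 0 < Z ->
  (forall tau, In tau (all_trajs eS eA T) -> traj_prob p1 P pi tau = sqrt (p tau) / Z) ->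
  regret eS eA T p1 P p pi = EFin (Z * Z).
Proof. intros Hp HZ Zpos HE. unfold regret. rewrite existsb_false_of.
 - f_equal. transitivity (sumR (all_trajs eS eA T) (fun tau => Z * sqrt (p tau))); [|rewrite sumR_scal, HZ; ring]. apply sumR_ext_in. intros tau Hin.
   rewrite HE by auto. destruct (Rltb 0 (p tau)) eqn:E.
   + apply Rltb_true in E. pose proof (sqrt_lt_R0 _ E).
     pose proof (sqrt_sqrt (p tau) (Hp tau Hin)).
     rewrite <- H0 at 1. field. lra.
   + apply Rltb_false in E. assert (p tau = 0) by (pose proof (Hp tau Hin); lra).
     rewrite H, sqrt_0. ring.
 - intros tau Hin. destruct (Rltb 0 (p tau)) eqn:E; [|reflexivity]. simpl.
   apply Rltb_true in E. rewrite HE by auto.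
   replace (Rltb 0 (sqrt (p tau) / Z)) with true; [reflexivity|].
   symmetry; apply Rltb_true. apply Rdiv_lt_0_compat; auto. apply sqrt_lt_R0; auto.
Qed.

Theorem lemma1
  (St Ac : Type) (eS : list St) (eA : list Ac)
  (HS : finite_enum eS) (HA : finite_enum eA)
  (T : nat) (HT : (1 <= T)%nat)
  (p1 : St -> R) (P : St -> Ac -> St -> R)
  (Hp1 : (forall s, 0 <= p1 s) /\ sumR eS p1 = 1)
  (HP : forall s a, (forall s', 0 <= P s a s') /\ sumR eS (P s a) = 1)
  (p : traj St Ac -> R)
  (Hp : (forall tau, In tau (all_trajs eS eA T) -> 0 <= p tau) /\
        sumR (all_trajs eS eA T) p = 1)
  (Hcirc : exists pic : policy St Ac,
      is_policy eS eA T pic /\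
      forall tau, In tau (all_trajs eS eA T) ->
        traj_prob p1 P pic tau =
        sqrt (p tau) / sumR (all_trajs eS eA T) (fun tau' => sqrt (p tau'))) :
  exists r : reward St Ac,
    forall pi : policy St Ac,
      argmin_regret eS eA T p1 P p pi <-> argmax_J eS eA T p1 P r pi.
Proof.
  destruct Hcirc as [pic [Hpic Hq]]. destruct Hp1 as [Hp1 Hs1]. destruct Hp as [Hp Hsp].
  set (Z := sumR (all_trajs eS eA T) (fun tau' => sqrt (p tau'))) in *.
  assert (HP0 : forall s a s', 0 <= P s a s') by (intros; apply HP).
  assert (HPs : forall s a, sumR eS (P s a) = 1) by (intros; apply HP).
  assert (Zpos : 0 < Z).
  { assert (Z0 : 0 <= Z) by (apply sumR_nonneg; intros; apply sqrt_pos).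
    destruct Z0 as [Z0|Z0]; auto. exfalso.
    assert (H0 : forall tau, In tau (all_trajs eS eA T) -> 0 = sqrt (p tau)).
    { apply sumR_eq_le; [intros; apply sqrt_pos|]. rewrite sumR_zero. exact Z0. }
    assert (sumR (all_trajs eS eA T) p = sumR (all_trajs eS eA T) (fun _ => 0)).
    { apply sumR_ext_in. intros tau Hin. specialize (H0 tau Hin).
      apply sqrt_eq_0; auto. }
    rewrite sumR_zero in H. lra. }
  assert (Hlb : forall pi, is_policy eS eA T pi -> _) by
    (intros pi Hpi; exact (reg_lb eS eA T p1 P p pi Z
       (fun tau Hin => traj_nonneg eS eA T p1 P pi tau HT Hp1 HP0 Hpi Hin)
       (traj_sum eS eA T p1 P pi HT Hs1 HPs Hpi) Hp eq_refl Zpos)).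
  exists (rew pic). intro pi.
  transitivity (is_policy eS eA T pi /\
    forall tau, In tau (all_trajs eS eA T) -> traj_prob p1 P pi tau = traj_prob p1 P pic tau).
  - split.
    + intros [Hpi Hmin]. split; auto. specialize (Hmin pic Hpic).
      rewrite (reg_E eS eA T p1 P p pic Z Hp eq_refl Zpos Hq) in Hmin.
      destruct (Hlb pi Hpi) as [E|[v [E [_ Hv]]]]; rewrite E in Hmin; [destruct Hmin|].
      simpl in Hmin. intros tau Hin. rewrite Hq, Hv by auto. reflexivity.
    + intros [Hpi HE]. split; auto. intros pi' Hpi'.
      rewrite (reg_E eS eA T p1 P p pi Z Hp eq_refl Zpos) by (intros; rewrite HE, Hq; auto).
      destruct (Hlb pi' Hpi') as [E|[v [E [Hv _]]]]; rewrite E; simpl; auto.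
  - split.
    + intros [Hpi HE]. split; auto. intros pi' Hpi'.
      rewrite (J_E eS eA T p1 P pi pic HT Hp1 HP0 Hpi Hpic HE).
      exact (proj1 (J_le eS eA T p1 P pi' pic HT Hp1 Hs1 HP Hpi' Hpic)).
    + intros [Hpi Hmax]. split; auto. specialize (Hmax pic Hpic).
      rewrite (J_E eS eA T p1 P pic pic HT Hp1 HP0 Hpic Hpic (fun _ _ => eq_refl)) in Hmax.
      exact (proj2 (J_le eS eA T p1 P pi pic HT Hp1 Hs1 HP Hpi Hpic) Hmax).
Qed.
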